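(* For every $k\ge1$, every $1\le p\le k$, all integers $m_1,\dots,m_k$ and every $n\ge0$, $$\mathcal D_k(m_1,\dots,m_{p-1},m_p,m_{p+1},\dots,m_k;n)=\mathcal D_k(m_1,\dots,m_{p-1},-m_p,m_{p+1},\dots,m_k;n).$$
   Context: A partition is a finite nonincreasing sequence $\lambda=(\lambda_1,\dots,\lambda_r)$ of positive integers (possibly empty); $l(\lambda)=r$, $|\lambda|=\sum\lambda_i$, $\lambda_1$ the largest part. Let $k\ge1$. A $k$-marked Durfee symbol of $n$ is an array $\eta=\begin{pmatrix}\alpha^k,&\dots,&\alpha^1\\ \beta^k,&\dots,&\beta^1\end{pmatrix}_D$ consisting of an integer $D\ge0$ and $2k$ partitions $\alpha^i,\beta^i$ with $\sum_{i=1}^k(|\alpha^i|+|\beta^i|)+D^2=n$, such that: (1) $\alpha^i$ is nonempty for $1\le i<k$; (2) for $1\le i<k$ every part of $\beta^i$ is $\le\alpha^i_1$, and for $2\le i\le k$ every part of $\alpha^i$ and every part of $\beta^i$ is $\ge\alpha^{i-1}_1$; (3) all parts of $\alpha^k$ and $\beta^k$ are $\le D$. The $i$th rank is $\rho_i(\eta)=l(\alpha^i)-l(\beta^i)-1$ for $1\le i<k$ and $\rho_k(\eta)=l(\alpha^k)-l(\beta^k)$. $\mathcal D_k(m_1,\dots,m_k;n)$ is the number of $k$-marked Durfee symbols of $n$ with $\rho_i=m_i$ for all $i$. *)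

(* Defs.v *)
From mathcomp Require Import all_boot all_order all_algebra.
Set Implicit Arguments. Unset Strict Implicit. Unset Printing Implicit Defensive.
Import GRing.Theory Num.Theory.

Definition is_partition (l : seq nat) : bool :=
  all (fun x => 0 < x) l && sorted geq l.

Definition psize (l : seq nat) : nat := sumn l.

Definition lpart (l : seq nat) : nat := head 0 l.

Fixpoint seqs_upto (len b : nat) : seq (seq nat) :=
  match len with
  | 0 => [:: [::]]
  | len'.+1 => [:: [::]] ++ flatten [seq [seq x :: s | s <- seqs_upto len' b] | x <- iota 1 b]
  end.

Definition partitions_upto (n : nat) : seq (seq nat) :=
  [seq l <- seqs_upto n n | is_partition l & psize l <= n].

Fixpoint lists_of (k : nat) (L : seq (seq nat)) : seq (seq (seq nat)) :=
  match k with
  | 0 => [:: [::]]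
  | k'.+1 => flatten [seq [seq x :: s | s <- lists_of k' L] | x <- L]
  end.

(* A k-marked Durfee symbol is encoded as (D, al, be) where
   al = [:: alpha^1; ...; alpha^k] and be = [:: beta^1; ...; beta^k];
   index j (0-based) of al / be stands for alpha^(j+1) / beta^(j+1). *)
Definition alphaD (al : seq (seq nat)) (j : nat) := nth [::] al j.

Definition is_kDurfee (k n D : nat) (al be : seq (seq nat)) : bool :=
  [&& size al == k, size be == k,
      all is_partition al, all is_partition be,
      sumn [seq psize a | a <- al] + sumn [seq psize b | b <- be] + D ^ 2 == n,
      all (fun j => nth [::] al j != [::]) (iota 0 k.-1),
      all (fun j => all (fun x => x <= lpart (nth [::] al j)) (nth [::] be j))
          (iota 0 k.-1),
      all (fun j => all (fun x => lpart (nth [::] al j.-1) <= x) (nth [::] al j)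
                    && all (fun x => lpart (nth [::] al j.-1) <= x) (nth [::] be j))
          (iota 1 k.-1) &
      all (fun x => x <= D) (nth [::] al k.-1) && all (fun x => x <= D) (nth [::] be k.-1)].

Definition rankD (k : nat) (al be : seq (seq nat)) (j : nat) : int :=
  (size (nth [::] al j))%:Z - (size (nth [::] be j))%:Z - (j < k.-1)%:Z.

(* Every k-marked Durfee symbol of n has D <= n and all its partitions of
   size <= n, so it occurs exactly once in the enumeration below. *)
Definition Dcount (k : nat) (m : 'I_k -> int) (n : nat) : nat :=
  count (fun t : nat * seq (seq nat) * seq (seq nat) =>
           let: (D, al, be) := t in
           is_kDurfee k n D al be && [forall i : 'I_k, rankD k al be i == m i])
    (flatten [seq [seq (D, alb.1, alb.2) | alb <- [seq (al, be) | al <- lists_of k (partitions_upto n),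
                                                              be <- lists_of k (partitions_upto n)]]
             | D <- iota 0 n.+1]).

(* Main.v *)
Require Import Defs.
From mathcomp Require Import all_boot all_order all_algebra.
Import GRing.Theory Num.Theory.
Set Implicit Arguments. Unset Strict Implicit.

Lemma mem_seqs_upto len b s :
  (s \in seqs_upto len b) = (size s <= len) && all (fun x => 0 < x <= b) s.
Proof.
elim: len s => [|len IH] [|x s] //=.
rewrite inE /= ltnS; apply/allpairsP/idP.
  case=> [[y t]] /= [Hy Ht [-> ->]].
  move: Hy Ht; rewrite mem_iota add1n ltnS IH => -> /andP [-> ->] //.
case/and3P=> Hs Hx Ha; exists (x, s); split => //=.
  by rewrite mem_iota add1n ltnS.
by rewrite IH Hs.
Qed.

Lemma uniq_seqs_upto len b : uniq (seqs_upto len b).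
Proof.
elim: len => [|len IH] //=.
apply/andP; split.
  by apply/negP => /allpairsP [[y t]] [].
apply: allpairs_uniq => //; first exact: iota_uniq.
by move=> [x1 s1] [x2 s2] _ _ /= [-> ->].
Qed.

Lemma mem_lists_of k L s : (s \in lists_of k L) = (size s == k) && all (mem L) s.
Proof.
elim: k s => [|k IH] [|x s] //=.
  by apply/negP => /allpairsP [[y t]] [].
apply/allpairsP/idP.
  by case=> [[y t]] /= [Hy Ht [-> ->]]; move: Ht; rewrite eqSS IH Hy => /andP [-> ->].
rewrite eqSS => /and3P [Hs Hx Ha]; exists (x, s); split => //=.
by rewrite IH Hs.
Qed.

Lemma uniq_lists_of k L : uniq L -> uniq (lists_of k L).
Proof.
move=> UL; elim: k => [|k IH] //=.
apply: allpairs_uniq => //.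
by move=> [x1 s1] [x2 s2] _ _ /= [-> ->].
Qed.

Lemma mem_partitions_upto n l :
  is_partition l -> psize l <= n -> l \in partitions_upto n.
Proof.
move=> Hp Hs; rewrite mem_filter Hp Hs /= mem_seqs_upto.
case/andP: Hp => Hpos _.
have Hsz : size l <= psize l.
  rewrite /psize; elim: l Hpos {Hs} => //= x l IH /andP [Hx Hl].
  by rewrite -add1n leq_add // IH.
rewrite (leq_trans Hsz Hs) /=.
apply/allP => x Hx; rewrite (allP Hpos) //=.
apply: leq_trans Hs; rewrite /psize.
elim: l Hx {Hpos Hsz} => //= y l IH; rewrite inE => /orP [/eqP ->|/IH H].
  exact: leq_addr.
exact: leq_trans H (leq_addl _ _).
Qed.

Lemma uniq_partitions_upto n : uniq (partitions_upto n).
Proof. exact/filter_uniq/uniq_seqs_upto. Qed.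

Lemma geq_tr : transitive geq.
Proof. by move=> y x z h1 h2; exact: leq_trans h2 h1. Qed.

Lemma part_cons x s : is_partition (x :: s) =
  [&& 0 < x, is_partition s & all (fun y => y <= x) s].
Proof.
rewrite /is_partition /= (path_sortedE geq_tr).
have -> : all (geq x) s = all (leq^~ x) s by [].
by apply/idP/idP => [/and3P[/andP[-> ->] -> ->]|/and3P[-> /andP[-> ->] ->]].
Qed.

Lemma all_nth_all (P : pred (seq nat)) s : all P s -> P [::] -> forall j, P (nth [::] s j).
Proof.
move=> /(all_nthP [::]) H H0 j; case: (ltnP j (size s)) => hj; first exact: H.
by rewrite nth_default.
Qed.

Lemma sumn_nth (g : seq nat -> nat) s :
  sumn (map g s) = \sum_(j < size s) g (nth [::] s j).
Proof.
elim: s => [|x s IH]; first by rewrite big_ord0.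
by rewrite big_ord_recl /= IH.
Qed.

Lemma nth_mk (f : nat -> seq nat) k j :
  nth [::] (mkseq f k) j = if j < k then f j else [::].
Proof.
case: ltnP => hj; first exact: nth_mkseq.
by rewrite nth_default // size_mkseq.
Qed.

Section Key.
Variables (k p : nat) (hp : p < k).

Definition newA (al be : seq (seq nat)) :=
  if p == k.-1 then nth [::] be p else lpart (nth [::] al p) :: nth [::] be p.
Definition newB (al be : seq (seq nat)) :=
  if p == k.-1 then nth [::] al p else behead (nth [::] al p).
Definition Fl al be := mkseq (fun j => if j == p then newA al be else nth [::] al j) k.
Definition Fr al be := mkseq (fun j => if j == p then newB al be else nth [::] be j) k.

Lemma nth_Fl al be j : size al = k ->
  nth [::] (Fl al be) j = if j == p then newA al be else nth [::] al j.
Proof.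
move=> Ha; rewrite nth_mk; case: ltnP => hj //.
have -> : (j == p) = false by apply/negbTE; rewrite neq_ltn (leq_trans hp hj) orbT.
by rewrite nth_default // Ha.
Qed.

Lemma nth_Fr al be j : size be = k ->
  nth [::] (Fr al be) j = if j == p then newB al be else nth [::] be j.
Proof.
move=> Ha; rewrite nth_mk; case: ltnP => hj //.
have -> : (j == p) = false by apply/negbTE; rewrite neq_ltn (leq_trans hp hj) orbT.
by rewrite nth_default // Ha.
Qed.


Let k0 : 0 < k := leq_ltn_trans (leq0n p) hp.

Lemma pk1 : (k.-1 < k).
Proof. by rewrite prednK ?ltnSn ?k0. Qed.

Lemma ple : p <= k.-1.
Proof. by rewrite -ltnS prednK ?k0. Qed.

Lemma key_durfee n D al be : is_kDurfee k n D al be ->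
  is_kDurfee k n D (Fl al be) (Fr al be).
Proof.
case/andP=> /eqP Sa /andP[/eqP Sb /andP[Pa /andP[Pb /andP[/eqP Hs
  /andP[H1 /andP[H2a /andP[H2b /andP[H3a H3b]]]]]]]].
have PA := @all_nth_all _ _ Pa isT; have PB := @all_nth_all _ _ Pb isT.
rewrite /is_kDurfee !size_mkseq !eqxx /=.
case Ep: (p == k.-1).
- have Ep' := eqP Ep.
  have nA : newA al be = nth [::] be p by rewrite /newA Ep.
  have nB : newB al be = nth [::] al p by rewrite /newB Ep.
  have Hlt : forall j, j < k.-1 -> (j == p) = false.
    by move=> j hj; apply/negbTE; rewrite Ep' neq_ltn hj.
  apply/andP; split.
    apply/(all_nthP [::]) => j _; rewrite nth_Fl //; case: (_ =P p) => _.
      by rewrite nA. by [].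
  apply/andP; split.
    apply/(all_nthP [::]) => j _; rewrite nth_Fr //; case: (_ =P p) => _.
      by rewrite nB. by [].
  apply/andP; split.
    rewrite -Hs !sumn_nth !size_mkseq Sa Sb -!big_split /=.
    apply/eqP; congr (_ + _); apply: eq_bigr => j _.
    rewrite nth_Fl // nth_Fr //; case: (_ =P p) => [->|_] //.
    by rewrite nA nB addnC.
  apply/andP; split.
    apply/allP => j Hj; have hj : j < k.-1 by move: Hj; rewrite mem_iota.
    by rewrite nth_Fl // Hlt //; apply: (allP H1).
  apply/andP; split.
    apply/allP => j Hj; have hj : j < k.-1 by move: Hj; rewrite mem_iota.
    by rewrite nth_Fl // nth_Fr // Hlt //; apply: (allP H2a).
  apply/andP; split.
    apply/allP => j Hj.
    have /andP[hj0 hj] : 0 < j < k by move: Hj; rewrite mem_iota add1n prednK ?k0.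
    have hj1 : j.-1 < k.-1 by rewrite -ltnS !prednK ?k0.
    rewrite nth_Fl // Hlt // nth_Fl // nth_Fr //.
    have := allP H2b j Hj.
    by case: (_ =P p) => [->|_] //; rewrite nA nB => /andP[-> ->].
  rewrite nth_Fl // nth_Fr // eq_sym Ep nA nB.
  by rewrite Ep' H3a H3b.
- have Hpk : p < k.-1 by rewrite ltn_neqAle Ep ple.
  have Hpi : p \in iota 0 k.-1 by rewrite mem_iota.
  case Ea : (nth [::] al p) => [|M a'].
    by move: (allP H1 p Hpi); rewrite Ea.
  have := PA p; rewrite Ea part_cons => /and3P[HM Pa' Ma'].
  have nA : newA al be = M :: nth [::] be p by rewrite /newA Ep Ea.
  have nB : newB al be = a' by rewrite /newB Ep Ea.
  have LP : forall i, lpart (nth [::] (Fl al be) i) = lpart (nth [::] al i).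
    by move=> i; rewrite nth_Fl //; case: (_ =P p) => [->|_] //; rewrite nA Ea.
  apply/andP; split.
    apply/(all_nthP [::]) => j _; rewrite nth_Fl //; case: (_ =P p) => _ //.
    rewrite nA part_cons HM PB /=.
    by have := allP H2a p Hpi; rewrite Ea.
  apply/andP; split.
    apply/(all_nthP [::]) => j _; rewrite nth_Fr //; case: (_ =P p) => _ //.
    by rewrite nB.
  apply/andP; split.
    rewrite -Hs !sumn_nth !size_mkseq Sa Sb -!big_split /=.
    apply/eqP; congr (_ + _); apply: eq_bigr => j _.
    rewrite nth_Fl // nth_Fr //; case: (_ =P p) => [->|_] //.
    by rewrite nA nB Ea /psize /= addnAC.
  apply/andP; split.
    apply/allP => j Hj; rewrite nth_Fl //; case: (_ =P p) => [_|_]; first by rewrite nA.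
    exact: (allP H1).
  apply/andP; split.
    apply/allP => j Hj; rewrite LP nth_Fr //; case: (_ =P p) => [->|_].
      by rewrite nB Ea.
    exact: (allP H2a).
  apply/andP; split.
    apply/allP => j Hj; rewrite LP nth_Fl // nth_Fr //.
    have := allP H2b j Hj.
    case: (_ =P p) => [->|_] //; rewrite nA nB Ea /= => /andP[/andP[-> ->] ->].
    by rewrite andbT.
  by rewrite nth_Fl // nth_Fr // eq_sym Ep H3a H3b.
Qed.


Lemma key_rank n D al be : is_kDurfee k n D al be -> forall j,
  rankD k (Fl al be) (Fr al be) j =
  (if j == p then - rankD k al be j else rankD k al be j)%R.
Proof.
case/andP=> /eqP Sa /andP[/eqP Sb /andP[Pa /andP[Pb /andP[/eqP Hs
  /andP[H1 _]]]]] j.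
rewrite /rankD nth_Fl // nth_Fr //; case: (j =P p) => [->|_] //.
rewrite /newA /newB; case Ep: (p == k.-1).
  by rewrite (eqP Ep) ltnn /= !GRing.subr0 GRing.opprB.
have Hpk : p < k.-1 by rewrite ltn_neqAle Ep ple.
have Hpi : p \in iota 0 k.-1 by rewrite mem_iota.
case Ea : (nth [::] al p) => [|M a'].
  by move: (allP H1 p Hpi); rewrite Ea.
rewrite Hpk /=.
set a := size a'; set b := size (nth [::] be p).
rewrite -(addn1 a) -(addn1 b) !PoszD.
by rewrite (GRing.addrAC (b%:Z + 1)%R) GRing.addrK (GRing.addrAC (a%:Z + 1)%R) GRing.addrK GRing.opprB.
Qed.

Lemma key_inv n D al be : is_kDurfee k n D al be ->
  Fl (Fl al be) (Fr al be) = al /\ Fr (Fl al be) (Fr al be) = be.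
Proof.
case/andP=> /eqP Sa /andP[/eqP Sb /andP[Pa /andP[Pb /andP[/eqP Hs
  /andP[H1 _]]]]].
have SFl : size (Fl al be) = k by rewrite size_mkseq.
have SFr : size (Fr al be) = k by rewrite size_mkseq.
have [nA nB] : newA (Fl al be) (Fr al be) = nth [::] al p /\
               newB (Fl al be) (Fr al be) = nth [::] be p.
  rewrite /newA /newB nth_Fl // nth_Fr // eqxx /newA /newB.
  case Ep: (p == k.-1) => //.
  have Hpk : p < k.-1 by rewrite ltn_neqAle Ep ple.
  have Hpi : p \in iota 0 k.-1 by rewrite mem_iota.
  case Ea : (nth [::] al p) => [|M a'] //.
  by move: (allP H1 p Hpi); rewrite Ea.
split; apply: (@eq_from_nth _ [::]); rewrite ?size_mkseq ?Sa ?Sb // => j _.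
  by rewrite nth_Fl // nth_Fl //; case: (j =P p) => [->|_].
by rewrite nth_Fr // nth_Fr //; case: (j =P p) => [->|_].
Qed.

End Key.

Lemma count_inv (T : eqType) (L : seq T) (P Q : pred T) (f : T -> T) :
  uniq L -> (forall x, P x -> x \in L) -> (forall x, Q x -> x \in L) ->
  (forall x, P x -> Q (f x) /\ f (f x) = x) ->
  (forall x, Q x -> P (f x) /\ f (f x) = x) -> count P L = count Q L.
Proof.
move=> UL PL QL HP HQ; rewrite -!size_filter.
have Hperm : perm_eq (map f (filter P L)) (filter Q L).
  apply: uniq_perm; last first.
  - move=> y; apply/mapP/idP.
      case=> x; rewrite mem_filter => /andP[Px _] ->.
      by rewrite mem_filter (HP x Px).1 QL // (HP x Px).1.
    rewrite mem_filter => /andP[Qy _]; exists (f y); last by rewrite (HQ y Qy).2.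
    by rewrite mem_filter (HQ y Qy).1 PL // (HQ y Qy).1.
  - exact: filter_uniq.
  rewrite map_inj_in_uniq ?filter_uniq //.
  move=> x y; rewrite !mem_filter => /andP[Px _] /andP[Py _] E.
  by rewrite -(HP x Px).2 E (HP y Py).2.
by rewrite -(perm_size Hperm) size_map.
Qed.

Lemma psize_le (a : seq nat) (al : seq (seq nat)) :
  a \in al -> psize a <= sumn [seq psize b | b <- al].
Proof.
elim: al => //= b al IH; rewrite inE => /orP [/eqP ->|/IH H].
  exact: leq_addr.
exact: leq_trans H (leq_addl _ _).
Qed.

Definition Ft k p (t : nat * seq (seq nat) * seq (seq nat)) :=
  let: (D, al, be) := t in (D, Fl k p al be, Fr k p al be).

Definition Pm k n (m : 'I_k -> int) (t : nat * seq (seq nat) * seq (seq nat)) :=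
  let: (D, al, be) := t in
  is_kDurfee k n D al be && [forall i : 'I_k, rankD k al be i == m i].

Lemma step k n (p : 'I_k) (m m' : 'I_k -> int) :
  (forall i, m' i = if i == p then (- m i)%R else m i) ->
  forall t, Pm n m t -> Pm n m' (Ft k p t) /\ Ft k p (Ft k p t) = t.
Proof.
move=> Hm [[D al be]] /= /andP[HD /forallP HR].
have hp := ltn_ord p.
rewrite key_durfee //=; split; last first.
  by case: (key_inv hp HD) => -> ->.
apply/forallP => i; rewrite (key_rank hp HD) Hm (eqP (HR i)).
by have -> : (val i == val p) = (i == p) by [].
Qed.

Lemma memL k n D al be : is_kDurfee k n D al be ->
  (D, al, be) \in
  flatten [seq [seq (D, alb.1, alb.2) | alb <- [seq (al, be) | al <- lists_of k (partitions_upto n),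
                                                              be <- lists_of k (partitions_upto n)]]
             | D <- iota 0 n.+1].
Proof.
case/andP=> /eqP Sa /andP[/eqP Sb /andP[Pa /andP[Pb /andP[/eqP Hs _]]]].
apply/allpairsP; exists (D, (al, be)) => /=; split => //.
  rewrite -[0 :: _]/(iota 0 n.+1).   rewrite mem_iota /= ltnS -Hs.
  apply: leq_trans (leq_addl _ _).
  case: D {Hs} => // d; exact: leq_pmulr.
apply: allpairs_f; rewrite mem_lists_of ?Sa ?Sb eqxx /=; apply/allP => a Ha.
- apply: mem_partitions_upto; first exact: (allP Pa).
  by rewrite -Hs -addnA; apply: leq_trans (leq_addr _ _); exact: psize_le.
- apply: mem_partitions_upto; first exact: (allP Pb).
  rewrite -Hs -addnA; apply: leq_trans (leq_addl _ _).
  by apply: leq_trans (leq_addr _ _); exact: psize_le.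
Qed.

Local Open Scope ring_scope.

(* p : 'I_k is the 0-based index of the flipped rank (p+1 in the paper). *)
Theorem mainTheorem10 (k : nat) (hk : (1 <= k)%N) (p : 'I_k) (m : 'I_k -> int) (n : nat) :
  Dcount m n = Dcount (fun i : 'I_k => if i == p then - m i else m i) n.
Proof.
rewrite /Dcount; apply: (count_inv (f := Ft k p)).
- apply: allpairs_uniq; first exact: iota_uniq.
  + apply: allpairs_uniq; try exact/uniq_lists_of/uniq_partitions_upto.
    by move=> [a1 b1] [a2 b2] _ _ /= [-> ->].
  + by move=> [D1 [a1 b1]] [D2 [a2 b2]] _ _ /= [-> -> ->].
- by case=> [[D al be]] /andP[H _]; exact: memL.
- by case=> [[D al be]] /andP[H _]; exact: memL.
- by apply: step => i.
- apply: step => i; case: (i == p) => //; by rewrite opprK.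
Qed.
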